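(* Let $\mathcal{G}=(V,L)$ be a finite connected undirected graph with monitor set $M$ and non-monitor set $N=V\setminus M$, $\sigma=|N|$, let $S\subseteq N$ be nonempty, let $m\in M$, and let $q$ be an integer with $0\le q\le\sigma-1$. The following are equivalent: (1) for every set $V'$ consisting of $m$ together with at most $q$ non-monitors, each connected component of $\mathcal{G}-V'$ that contains a node of $S$ also contains a monitor; (2) $\Gamma_{\mathcal{G}_m}(S,m')\ge q+1$.
   Context: $\mathcal{G}-V'$ denotes deletion of the nodes of $V'$ and incident links. For $M'\subseteq M$, $\mathcal{N}(M')$ is the set of non-monitors adjacent to at least one monitor of $M'$. $\mathcal{G}_m$ is obtained from $\mathcal{G}$ by deleting all monitors, adding a virtual node $m'$, and linking $m'$ to every node of $\mathcal{N}(M\setminus\{m\})$. For nodes $s,t$ of a graph $\mathcal{H}$, $C_{\mathcal{H}}(s,t)$ is a minimum-cardinality set of nodes (other than $s,t$) whose deletion destroys all $s$–$t$ paths; if $s,t$ are adjacent, $C_{\mathcal{H}}(s,t):=V(\mathcal{H})\setminus\{t\}$. $\Gamma_{\mathcal{H}}(S,m'):=\min_{w\in S}|C_{\mathcal{H}}(w,m')|$. *)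

(* Defs.v *)
From mathcomp Require Import all_boot.
Set Implicit Arguments. Unset Strict Implicit. Unset Printing Implicit Defensive.

(* A finite simple undirected graph is a symmetric irreflexive e : rel T on a finType T.
   Subgraphs are given by a vertex set W : {set T} (induced subgraph). *)

Definition restr (T : finType) (e : rel T) (A : {set T}) : rel T :=
  [rel x y | [&& e x y, x \in A & y \in A]].

Definition separates (T : finType) (e : rel T) (W : {set T}) (s t : T) (X : {set T}) : bool :=
  (X \subset W :\: [set s; t]) && ~~ connect (restr e (W :\: X)) s t.

Definition cut_size (T : finType) (e : rel T) (W : {set T}) (s t : T) : nat :=
  if e s t then #|W :\ t|
  else \big[minn/#|W|]_(X : {set T} | separates e W s t X) #|X|.

Definition Gamma (T : finType) (e : rel T) (W : {set T}) (S : {set T}) (t : T) : nat :=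
  \big[minn/#|W|]_(w in S) cut_size e W w t.

Definition nbr_nonmon (V : finType) (e : rel V) (M M' : {set V}) : {set V} :=
  [set y in ~: M | [exists u in M', e u y]].

(* G_m : vertices = non-monitors (Some x) plus the virtual node m' (None) *)
Definition Gm_vertices (V : finType) (M : {set V}) : {set option V} :=
  None |: [set Some x | x in ~: M].

Definition Gm_edge (V : finType) (e : rel V) (M : {set V}) (m : V) : rel (option V) :=
  fun a b => match a, b with
  | Some x, Some y => e x y
  | None, Some y => y \in nbr_nonmon e M (M :\ m)
  | Some x, None => x \in nbr_nonmon e M (M :\ m)
  | None, None => false
  end.

(* Main.v *)
Require Import Defs.
From mathcomp Require Import all_boot.
From mathcomp Require Import zify.

Lemma bigmin_le (I : finType) (P : pred I) (F : I -> nat) d i :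
  P i -> \big[minn/d]_(j | P j) F j <= F i.
Proof.
move=> Pi; rewrite unlock.
have : i \in index_enum I by rewrite /index_enum -enumT mem_enum.
elim: (index_enum I) => [//|j r IH] /=; rewrite inE.
case/orP=> [/eqP <-|ir]; first by rewrite Pi geq_minl.
case: (P j) => //=; [exact: leq_trans (geq_minr _ _) (IH ir) | exact: IH].
Qed.

Lemma inW (V : finType) (M : {set V}) x :
  (Some x \in Gm_vertices M) = (x \in ~: M).
Proof.
by rewrite /Gm_vertices !inE /= (mem_imset _ _ (@Some_inj _)) ?inE.
Qed.

Lemma cardW (V : finType) (M : {set V}) : #|Gm_vertices M| = #|~: M|.+1.
Proof.
rewrite /Gm_vertices cardsU1 card_imset; last exact: Some_inj.
have -> : (None \notin [set Some x | x in ~: M]) = true.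
  by apply/negP => /imsetP [x _].
by [].
Qed.

Section Lem.
Variables (V : finType) (e : rel V) (M : {set V}) (m : V).
Hypothesis e_sym : symmetric e.
Hypothesis hm : m \in M.

Lemma fwd (U : {set V}) (X : {set option V}) :
  (forall x, (Some x \in X) = (x \in U)) -> None \notin X ->
  forall p x, x \notin M -> x \in ~: (m |: U) ->
  path (restr e (~: (m |: U))) x p -> last x p \in M :\ m ->
  connect (restr (Gm_edge e M m) (Gm_vertices M :\: X)) (Some x) None.
Proof.
move=> HX HN; elim=> [|y p IH] x xM xA /=.
  by move=> _; rewrite !inE (negbTE xM) andbF.
case/andP=> /= /and3P [exy _ yA] Hp Hl.
have xW : Some x \in Gm_vertices M :\: X.
  rewrite inE inW HX inE xM andbT.
  by move: xA; rewrite !inE negb_or => /andP [_ ->].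
have NW : None \in Gm_vertices M :\: X.
  by rewrite inE HN /Gm_vertices !inE.
case yM: (y \in M).
  apply: connect1; rewrite /restr /= xW NW andbT andbT /nbr_nonmon.
  rewrite inE inE xM /=; apply/existsP; exists y.
  rewrite e_sym exy !inE yM andbT andbT.
  by move: yA; rewrite !inE negb_or => /andP [].
apply: connect_trans (IH y (negbT yM) yA Hp Hl).
apply: connect1; rewrite /restr /= exy xW /=.
rewrite inE inW HX inE yM andbT.
by move: yA; rewrite !inE negb_or => /andP [_ ->].
Qed.

Lemma bwd (U : {set V}) :
  U \subset ~: M ->
  forall p x, path (restr (Gm_edge e M m) (Gm_vertices M :\: [set Some x | x in U])) (Some x) p ->
  last (Some x) p = None ->
  exists2 u, u \in M :\: (m |: U) & connect (restr e (~: (m |: U))) x u.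
Proof.
move=> UM.
have memA : forall y, Some y \in Gm_vertices M :\: [set Some x | x in U] ->
   (y \notin M) && (y \in ~: (m |: U)).
  move=> y; rewrite inE inW (mem_imset _ _ (@Some_inj _)) !inE negb_or.
  case/andP=> yU yM; rewrite yM yU andbT /=.
  by apply/negP=> /eqP ym; rewrite ym hm in yM.
elim=> [|b p IH] x //=.
case/andP=> /and3P [Hxb xW bW] Hp Hl.
have /andP [xM xA] := memA _ xW.
case: b Hxb bW Hp Hl => [y|] Hxb bW Hp Hl.
  have [u Hu Hc] := IH y Hp Hl.
  exists u => //; apply: connect_trans Hc; apply: connect1.
  have /andP [_ yA] := memA _ bW.
  by rewrite /restr /= xA yA andbT andbT; exact: Hxb.
move: Hxb; rewrite /= /nbr_nonmon inE => /andP [_ /existsP [u /andP [uM eux]]].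
have uU : u \notin U.
  apply/negP=> uU; have := subsetP UM u uU.
  by move: uM; rewrite !inE => /andP [_ ->].
move: uM; rewrite !inE => /andP [um uM].
exists u; first by rewrite !inE negb_or um uU uM.
apply: connect1; rewrite /restr /= e_sym eux xA /=.
by rewrite !inE negb_or um uU.
Qed.
End Lem.

Theorem lemma6 (V : finType) (e : rel V)
  (e_sym : symmetric e) (e_irr : irreflexive e)
  (e_conn : forall x y : V, connect e x y)
  (M S : {set V}) (m : V) (q : nat)
  (hS : S \subset ~: M) (hS0 : S != set0) (hm : m \in M)
  (hq : q <= #|~: M| - 1) :
  (forall U : {set V}, U \subset ~: M -> #|U| <= q ->
     forall s, s \in S -> s \notin m |: U ->
       exists2 u, u \in M :\: (m |: U) &
         connect (restr e (~: (m |: U))) s u)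
  <->
  q.+1 <= Gamma (Gm_edge e M m) (Gm_vertices M) [set Some x | x in S] None.
Proof.
have [s0 s0S] := set0Pn _ hS0.
have sig1 : 0 < #|~: M| by apply/card_gt0P; exists s0; exact: subsetP hS s0 s0S.
have hq' : q < #|~: M| by lia.
split.
- move=> H1; rewrite /Gamma.
  apply: (big_ind (fun n => q < n)).
  + by rewrite cardW; lia.
  + by move=> a b Ha Hb; rewrite leq_min Ha Hb.
  move=> w /imsetP [s sS ->].
  have sM : s \notin M by have := subsetP hS s sS; rewrite inE.
  rewrite /cut_size; case: ifP => _.
    have := cardsD1 None (Gm_vertices M); rewrite cardW.
    have -> : None \in Gm_vertices M by rewrite !inE.
    move=> H; lia.
  apply: (big_ind (fun n => q < n)).
  + by rewrite cardW; lia.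
  + by move=> a b Ha Hb; rewrite leq_min Ha Hb.
  move=> X /andP [Xsub Hnc]; rewrite ltnNge; apply/negP => HX.
  pose U := [set x | Some x \in X].
  have HU : forall x, (Some x \in X) = (x \in U) by move=> x; rewrite inE.
  have HN : None \notin X.
    by apply/negP=> /(subsetP Xsub); rewrite !inE eqxx orbT.
  have UM : U \subset ~: M.
    apply/subsetP=> x; rewrite inE => /(subsetP Xsub).
    by rewrite inE inW => /andP [_ ->].
  have Ucard : #|U| <= q.
    apply: leq_trans HX; rewrite -(card_imset U (@Some_inj _)).
    by apply/subset_leq_card/subsetP=> y /imsetP [x]; rewrite inE => ? ->.
  have sU : s \notin m |: U.
    rewrite !inE negb_or; apply/andP; split.
      by apply/negP=> /eqP sm; rewrite sm hm in sM.
    apply/negP=> /(subsetP Xsub); by rewrite !inE eqxx.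
  have [u uM /connectP [p Hp Hl]] := H1 U UM Ucard s sS sU.
  move/negP: Hnc; apply.
  apply: (@fwd V e M m e_sym U X HU HN p s sM _ Hp); first by rewrite inE.
  by rewrite -Hl; move: uM; rewrite !inE negb_or => /andP [/andP [-> _] ->].
- move=> HG U UM Uc s sS sU.
  have sM : s \notin M by have := subsetP hS s sS; rewrite inE.
  have Hc : connect (restr (Gm_edge e M m) (Gm_vertices M :\: [set Some x | x in U])) (Some s) None.
    have sW : Some s \in Gm_vertices M :\: [set Some x | x in U].
      rewrite inE inW (mem_imset _ _ (@Some_inj _)) inE sM andbT.
      by move: sU; rewrite !inE negb_or => /andP [_ ->].
    have NW : None \in Gm_vertices M :\: [set Some x | x in U].
      rewrite inE /Gm_vertices !inE andbT; by apply/negP=> /imsetP [].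
    have Hcut : q < cut_size (Gm_edge e M m) (Gm_vertices M) (Some s) None.
      apply: (leq_trans HG); rewrite /Gamma; apply: bigmin_le.
      by rewrite (mem_imset _ _ (@Some_inj _)).
    move: Hcut; rewrite /cut_size; case: ifP => Hadj Hcut.
      by apply: connect1; rewrite /restr /= sW NW andbT andbT; exact: Hadj.
    have : ~~ separates (Gm_edge e M m) (Gm_vertices M) (Some s) None [set Some x | x in U].
      apply/negP=> Hsep; move: (leq_trans Hcut (@bigmin_le _ _ (fun X : {set option V} => #|X|) _ _ Hsep)).
      by rewrite card_imset; [lia | exact: Some_inj].
    rewrite /separates negb_and negbK => /orP [|//].
    case/negP; apply/subsetP=> y /imsetP [x xU ->].
    rewrite inE inW [_ \in [set _; _]]inE negb_or /=; apply/andP; split; last by move: (subsetP UM x xU); rewrite inE.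
    rewrite !inE /= andbT; apply/negP=> /eqP [xs]; move: sU; by rewrite !inE -xs xU orbT.
  have [p Hp Hl] := connectP Hc.
  exact: (@bwd V e M m e_sym hm U UM p s Hp (esym Hl)).
Qed.
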